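(* For every integer $n>5$ with $n\neq10$ and every integer $k$ with $1\le k\le 9$, $F_{5,k}(n)\neq0$.
   Context: For an integer $j\ge0$, $\binom{x}{j}=x(x-1)\cdots(x-j+1)/j!$ as a polynomial in $x$, and $\binom{x}{j}=0$ for $j<0$. For integers $s\ge1$, $k\ge1$, the Moser polynomial is $F_{s,k}(x)=\sum_{p=1}^{s}(-1)^{p-1}p^{k-1}\binom{x}{s-p}$. *)

(* Defs.v *)
From HB Require Import structures.
From mathcomp Require Import all_boot all_order all_algebra.
Set Implicit Arguments. Unset Strict Implicit. Unset Printing Implicit Defensive.
Import Order.TTheory GRing.Theory Num.Theory.
Local Open Scope ring_scope.

Definition binomp (j : nat) : {poly rat} :=
  (j`!%:R)^-1 *: \prod_(i < j) ('X - (i%:R)%:P).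

(* Moser polynomial F_{s,k}(x) = sum_{p=1}^s (-1)^(p-1) p^(k-1) binom(x, s-p).
   Here p ranges over 1..s so s-p >= 0 always. *)
Definition moser (s k : nat) : {poly rat} :=
  \sum_(1 <= p < s.+1) ((-1) ^+ (p - 1)%N * (p%:R) ^+ (k - 1)%N) *: binomp (s - p)%N.

(* Main.v *)
Require Import Defs.
From Stdlib Require Import ZArith Lia.
From HB Require Import structures.
From mathcomp Require Import all_boot all_order all_algebra.
From mathcomp Require Import ring lra zify ssrZ.
Import Order.TTheory GRing.Theory Num.Theory.
Local Open Scope ring_scope.

Lemma hZ (c : rat) (p : {poly rat}) x : (c *: p).[x] = c * p.[x].
Proof. exact: hornerZ. Qed.

Lemma binE j (x : rat) : (binomp j).[x] = (j`!%:R)^-1 * \prod_(i < j) (x - i%:R).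
Proof.
rewrite /binomp.
have -> : forall c (p : {poly rat}), (c *: p).[x] = c * p.[x] by move=> c p; exact: hornerZ.
by rewrite horner_prod; congr (_ * _); apply: eq_bigr => i _; rewrite hornerXsubC.
Qed.

Lemma moser5E (x : rat) k :
  (moser 5 k).[x] * 24 = x*(x-1)*(x-2)*(x-3) - 4*2^+(k-1)*x*(x-1)*(x-2)
   + 12*3^+(k-1)*x*(x-1) - 24*4^+(k-1)*x + 24*5^+(k-1).
Proof.
(rewrite /moser; do 5 rewrite big_nat_recl //). rewrite big_geq // addr0.
rewrite !hornerD.
have E : forall c j, (c *: binomp j).[x] = c * (binomp j).[x] by move=> c j; exact: hornerZ.
rewrite !E.
rewrite !binE.
rewrite (_ : (5-1 = 4)%N) // (_ : (5-2 = 3)%N) // (_ : (5-3 = 2)%N) // (_ : (5-4 = 1)%N) //.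
rewrite (_ : (5-5 = 0)%N) // (_ : (2-1 = 1)%N) // (_ : (4-1 = 3)%N) // (_ : (1-1 = 0)%N) //.
rewrite (_ : (3-1 = 2)%N) //.
rewrite (_ : (4`! = 24)%N) // (_ : (3`! = 6)%N) // (_ : (2`! = 2)%N) // (_ : (1`! = 1)%N) // (_ : (0`! = 1)%N) //.
rewrite !big_ord_recr !big_ord0 /=.
rewrite expr1n.
set a := (2 ^+ (k-1)); set b := (3 ^+ (k-1)); set c := (4 ^+ (k-1)); set d := (5 ^+ (k-1)).
clearbody a b c d.
rewrite !expr0 expr1.
field. all: by [].
Qed.

Definition P {R : pzRingType} (m : nat) (x : R) : R :=
  x*(x-1)*(x-2)*(x-3) - 4*2^+m*x*(x-1)*(x-2) + 12*3^+m*x*(x-1) - 24*4^+m*x + 24*5^+m.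

Lemma P_morph (R S : pzRingType) (f : {rmorphism R -> S}) m x : f (P m x) = P m (f x).
Proof. by rewrite /P !(rmorphD, rmorphB, rmorphM, rmorphXn, rmorph_nat, rmorph1, rmorphN). Qed.

Section ZS.
Local Open Scope Z_scope.
Definition Q (m : nat) (z : Z) : Z :=
  z*(z-1)*(z-2)*(z-3) - 4*2^(Z.of_nat m)*z*(z-1)*(z-2) + 12*3^(Z.of_nat m)*z*(z-1)
   - 24*4^(Z.of_nat m)*z + 24*5^(Z.of_nat m).
End ZS.

Lemma expZ (a : Z) m : a ^+ m = Z.pow a (Z.of_nat m).
Proof.
elim: m => [|m IH]; first by [].
by rewrite exprS IH Nat2Z.inj_succ Z.pow_succ_r //; lia.
Qed.

Lemma PQ m z : P m z = Q m z.
Proof. rewrite /P /Q !expZ. reflexivity. Qed.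

Ltac evpow := repeat match goal with |- context [(?b ^ Z.of_nat ?m)%Z] => let v := eval vm_compute in (b ^ Z.of_nat m)%Z in change (b ^ Z.of_nat m)%Z with v end.

Section ZS2.
Local Open Scope Z_scope.
Definition chk (m : nat) : bool :=
  all (fun n => (n == 10)%N || negb (Z.eqb (Q m (Z.of_nat n)) 0)) (iota 6 994).

Lemma chk_ok : all chk (iota 0 9).
Proof. vm_compute. reflexivity. Qed.

Lemma Qlarge m z : (m <= 8)%N -> (1000 <= z) -> Q m z <> 0.
Proof.
move=> hm hz.
have [w hw ->] : exists2 w, (0 <= w) & z = (1000 + w) by exists (z - 1000); lia.
have h2 : (0 <= w * w) by nia.
have h3 : (0 <= w * w * w) by nia.
have h4 : (0 <= w * w * w * w) by nia.
rewrite /Q.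
do 9 (case: m hm => [_|m hm]; first by (evpow; nia)).
by [].
Qed.

Lemma Qnz m z : (m <= 8)%N -> (5 < z) -> z <> 10 -> Q m z <> 0.
Proof.
move=> hm h5 h10.
case: (Z.le_gt_cases 1000 z) => hz; first exact: Qlarge.
have hc : chk m.
  have := chk_ok; move/allP; apply; rewrite mem_iota; apply/andP; split => //.
move: hc; rewrite /chk => /allP /(_ (Z.to_nat z)).
rewrite mem_iota Z2Nat.id; last lia.
move=> H; have /orP [] := H ltac:(lia).
  by move/eqP => e; lia.
by move=> hne hq; rewrite hq in hne.
Qed.
End ZS2.

Theorem mainTheorem15 (n : int) (k : nat) :
  (5 < n)%R -> n != 10%:Z -> (1 <= k <= 9)%N ->
  (moser 5 k).[n%:~R] != 0.
Proof.
move=> hn h10 hk; apply/eqP => H.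
have := moser5E (n%:~R) k; rewrite H mul0r.
change (_ = _ -> False) with (0 <> P (k-1)%N ((n%:~R) : rat)).
rewrite -(@P_morph _ _ intr) => /esym /eqP; rewrite intr_eq0 => /eqP hP.
have := congr1 Z_of_int hP; rewrite (@P_morph _ _ Z_of_int) PQ.
apply: Qnz.
- by case/andP: hk => _ hk; rewrite leq_subLR.
- by case: n hn {h10 hP H} => m //= hn; rewrite ltz_nat in hn; lia.
- case: n hn h10 {hP H} => m //= hn h10 e.
  move/eqP: h10; apply; apply/eqP; rewrite eqz_nat; apply/eqP; lia.
Qed.
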